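(* Let $u\le v$ be positive integers, $n\ge0$, $I\in\mathrm{Hilb}^n(\{x^uy^v=0\},0)$, and $J^k=I\cap(x^ky^k)$. Let $0\le k\le v-2$ and suppose each of $J^k$ and $J^{k+1}$ is of type ① or ② (as defined below), with exponent pairs $(i_k,j_k)$ and $(i_{k+1},j_{k+1})$ respectively. Then (inequalities of pairs are componentwise): (1) if both are of type ①, then either $(i_k,j_k)=(i_{k+1},j_{k+1})$ or $(i_k,j_k)\ge(i_{k+1}+1,j_{k+1}+1)$; (2) if both are of type ②, then $(i_k,j_k)\ge(i_{k+1}+1,j_{k+1}+1)$; (3) if $J^k$ is of type ① and $J^{k+1}$ of type ②, then $(i_k,j_k)\ge(i_{k+1},j_{k+1})$; (4) if $J^k$ is of type ② and $J^{k+1}$ of type ①, then $(i_k,j_k)\ge(i_{k+1}+1,j_{k+1}+1)$.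
   Context: $\mathrm{Hilb}^n(\{x^uy^v=0\},0)$ is the set of ideals $I\subset\mathbb{C}[[x,y]]$ with $\dim_{\mathbb{C}}\mathbb{C}[[x,y]]/I=n$, supported at the origin, with $x^uy^v\in I$. For $0\le k\le v-1$: $J^k$ is of type ① with exponent pair $(i,j)$ if there are $a,b\in\mathbb{C}\setminus\{0\}$, integers $i,j\ge1$ and $h\in\mathbb{C}[[x,y]]$ such that $E=x^ky^k(ax^{i}+by^{j})+x^{k+1}y^{k+1}h\in J^k$ and $J^k=J^{k+1}+(E)$; $J^k$ is of type ② with exponent pair $(i,j)$ if there are integers $i,j\ge1$ and $h_1,h_2\in\mathbb{C}[[x,y]]$ such that $E_1=x^ky^kx^{i}+x^{k+1}y^{k+1}h_1$ and $E_2=x^ky^ky^{j}+x^{k+1}y^{k+1}h_2$ lie in $J^k$ and $J^k=J^{k+1}+(E_1,E_2)$, while $J^k$ is not of type ①. *)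

(* Defs.v *)
From Stdlib Require Import Reals.
From mathcomp Require Import all_boot all_algebra.
From mathcomp Require Import Rstruct complex.

Set Implicit Arguments.
Unset Strict Implicit.
Unset Printing Implicit Defensive.

Import GRing.Theory.
Local Open Scope ring_scope.

Definition CC : fieldType := (R[i])%C.

(* A formal power series f in C[[x,y]] is given by its coefficients:
   f a b is the coefficient of x^a y^b. *)
Definition ps := nat -> nat -> CC.

Definition ps_add (f g : ps) : ps := fun a b => f a b + g a b.
Definition ps_scale (c : CC) (f : ps) : ps := fun a b => c * f a b.
Definition ps_mul (f g : ps) : ps :=
  fun a b => \sum_(p < a.+1) \sum_(q < b.+1) f p q * g (a - p)%N (b - q)%N.
Definition mono (i j : nat) : ps :=
  fun a b => if (a == i) && (b == j) then 1 else 0.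

Definition psset := ps -> Prop.

Definition is_ideal (I : psset) : Prop :=
  [/\ I (fun _ _ => 0),
      (forall f g, I f -> I g -> I (ps_add f g)) &
      (forall h f, I f -> I (ps_mul h f))].

(* dim_C C[[x,y]]/I = n : there are n series whose classes form a
   C-basis of the quotient. *)
Definition lincomb (n : nat) (c : 'I_n -> CC) (B : 'I_n -> ps) : ps :=
  fun a b => \sum_(i < n) c i * B i a b.

Definition ps_sub (f g : ps) : ps := fun a b => f a b - g a b.

Definition quot_dim (I : psset) (n : nat) : Prop :=
  exists B : 'I_n -> ps,
    (forall f, exists c : 'I_n -> CC, I (ps_sub f (lincomb c B))) /\
    (forall c : 'I_n -> CC, I (lincomb c B) -> forall i, c i = 0).

(* I is supported at the origin: it contains a power of the maximal
   ideal (x,y), i.e. all monomials of large enough total degree. *)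
Definition supported_at_origin (I : psset) : Prop :=
  exists N : nat, forall a b, (N <= a + b)%N -> I (mono a b).

Definition in_Hilb (n u v : nat) (I : psset) : Prop :=
  [/\ is_ideal I, quot_dim I n, supported_at_origin I & I (mono u v)].

Definition Jk (I : psset) (k : nat) : psset :=
  fun f => I f /\ exists h, f = ps_mul (mono k k) h.

Definition eq_plus1 (J J' : psset) (E : ps) : Prop :=
  forall f, J f <-> exists g h, J' g /\ f = ps_add g (ps_mul h E).
Definition eq_plus2 (J J' : psset) (E1 E2 : ps) : Prop :=
  forall f, J f <-> exists g h1 h2,
      J' g /\ f = ps_add g (ps_add (ps_mul h1 E1) (ps_mul h2 E2)).

Definition type1 (I : psset) (k i j : nat) : Prop :=
  (1 <= i)%N /\ (1 <= j)%N /\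
  exists (a b : CC) (h : ps), a != 0 /\ b != 0 /\
    let E := ps_add (ps_mul (mono k k)
                       (ps_add (ps_scale a (mono i 0)) (ps_scale b (mono 0 j))))
                    (ps_mul (mono k.+1 k.+1) h) in
    Jk I k E /\ eq_plus1 (Jk I k) (Jk I k.+1) E.

Definition type2 (I : psset) (k i j : nat) : Prop :=
  [/\ (1 <= i)%N, (1 <= j)%N,
    (exists h1 h2 : ps,
      let E1 := ps_add (ps_mul (mono k k) (mono i 0)) (ps_mul (mono k.+1 k.+1) h1) in
      let E2 := ps_add (ps_mul (mono k k) (mono 0 j)) (ps_mul (mono k.+1 k.+1) h2) in
      [/\ Jk I k E1, Jk I k E2 & eq_plus2 (Jk I k) (Jk I k.+1) E1 E2]) &
    ~ (exists i' j', type1 I k i' j')].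

(* Main.v *)
Require Import Defs.
From mathcomp Require Import all_boot all_algebra.
From Stdlib Require Import FunctionalExtensionality.
From mathcomp Require Import zify.
From mathcomp Require Import zify.
Set Implicit Arguments.
Unset Strict Implicit.
Unset Printing Implicit Defensive.
Import GRing.Theory.
Local Open Scope ring_scope.

Lemma ps_mulE f g a b : ps_mul f g a b =
  \sum_(p < a.+1) \sum_(q < b.+1) f p q * g (a - p)%N (b - q)%N.
Proof. by []. Qed.

Lemma monoE a b p q : mono a b p q = if (p == a) && (q == b) then 1 else 0.
Proof. by []. Qed.

Lemma sum0 n (P : pred 'I_n) (F : 'I_n -> CC) :
  (forall i, P i -> F i = 0) -> \sum_(i<n | P i) F i = 0.
Proof. by move=> H; apply: big1. Qed.

Lemma sum_single n (F : 'I_n -> CC) (j : 'I_n) :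
  (forall i, i != j -> F i = 0) -> \sum_(i<n) F i = F j.
Proof. move=> H; rewrite (bigD1 j) //=.
have -> : \sum_(i < n | i != j) F i = 0 by apply: big1.
by rewrite addr0. Qed.

Lemma mulmonoE a b h p q : ps_mul (mono a b) h p q =
  if (a <= p)%N && (b <= q)%N then h (p - a)%N (q - b)%N else 0.
Proof.
rewrite ps_mulE.
case: (boolP (a <= p)%N) => ap; rewrite /=; last first.
  apply: sum0 => p' _; apply: sum0 => q' _.
  rewrite monoE.
  have -> : (nat_of_ord p' == a) = false.
    by apply/eqP => E; move: (ltn_ord p'); rewrite E ltnS (negPf ap).
  by rewrite mul0r.
have ap' : (a < p.+1)%N by [].
rewrite (@sum_single _ _ (Ordinal ap')) /=; last first.
  move=> p' /eqP np; apply: sum0 => q' _.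
  rewrite monoE.
  have -> : (nat_of_ord p' == a) = false.
    by apply/eqP => E; apply: np; apply: val_inj.
  by rewrite mul0r.
case: (boolP (b <= q)%N) => bq; rewrite /=; last first.
  apply: sum0 => q' _.
  rewrite monoE.
  have -> : (nat_of_ord q' == b) = false.
    by apply/eqP => E; move: (ltn_ord q'); rewrite E ltnS (negPf bq).
  by rewrite andbF mul0r.
have bq' : (b < q.+1)%N by [].
rewrite (@sum_single _ _ (Ordinal bq')) /=.
  by rewrite monoE !eqxx mul1r.
move=> q' /eqP nq.
rewrite monoE.
have -> : (nat_of_ord q' == b) = false.
  by apply/eqP => E; apply: nq; apply: val_inj.
by rewrite andbF mul0r.
Qed.

Lemma rowE H f s r c a : (forall p q, (q < s)%N -> f p q = 0) ->
  (forall p, f p s = if p == r then c else 0) ->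
  ps_mul H f a s = if (r <= a)%N then H (a - r)%N 0%N * c else 0.
Proof.
move=> f0 fs; rewrite ps_mulE.
have inner : forall p : 'I_a.+1, \sum_(q < s.+1) H p q * f (a - p)%N (s - q)%N
     = H p 0%N * (if (a - p == r)%N then c else 0).
  move=> p; rewrite (@sum_single _ _ ord0) /= ?subn0 ?fs //.
  move=> q nq; rewrite f0 ?mulr0 //.
  have : (0 < nat_of_ord q)%N by rewrite lt0n; apply: contra nq => /eqP E; apply/eqP/val_inj.
  move: (ltn_ord q); lia.
transitivity (\sum_(p < a.+1) H p 0%N * (if (a - p == r)%N then c else 0)).
  by apply: eq_bigr => p _; apply: inner.
case: (boolP (r <= a)%N) => ra.
  have ar : (a - r < a.+1)%N by lia.
  rewrite (@sum_single _ _ (Ordinal ar)) /=.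
    by rewrite (_ : a - (a - r) = r)%N ?eqxx //; lia.
  move=> p /eqP np.
  have -> : (a - p == r)%N = false.
    apply/eqP => E; apply: np; apply: val_inj => /=; move: (ltn_ord p); lia.
  by rewrite mulr0.
apply: sum0 => p _.
have -> : (a - p == r)%N = false by apply/eqP; lia.
by rewrite mulr0.
Qed.

Lemma colE H f s r c b : (forall p q, (p < s)%N -> f p q = 0) ->
  (forall q, f s q = if q == r then c else 0) ->
  ps_mul H f s b = if (r <= b)%N then H 0%N (b - r)%N * c else 0.
Proof.
move=> f0 fs; rewrite ps_mulE.
rewrite (@sum_single _ _ ord0) /=; last first.
  move=> p np; apply: sum0 => q _; rewrite f0 ?mulr0 //.
  have : (0 < nat_of_ord p)%N by rewrite lt0n; apply: contra np => /eqP E; apply/eqP/val_inj.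
  move: (ltn_ord p); lia.
transitivity (\sum_(q < b.+1) H 0%N q * (if (b - q == r)%N then c else 0)).
  by apply: eq_bigr => q _; rewrite subn0 fs.
case: (boolP (r <= b)%N) => rb.
  have br : (b - r < b.+1)%N by lia.
  rewrite (@sum_single _ _ (Ordinal br)) /=.
    by rewrite (_ : b - (b - r) = r)%N ?eqxx //; lia.
  move=> q /eqP nq.
  have -> : (b - q == r)%N = false.
    apply/eqP => E; apply: nq; apply: val_inj => /=; move: (ltn_ord q); lia.
  by rewrite mulr0.
apply: sum0 => q _.
have -> : (b - q == r)%N = false by apply/eqP; lia.
by rewrite mulr0.
Qed.

Definition G s X h := ps_add (ps_mul (mono s s) X) (ps_mul (mono s.+1 s.+1) h).

Lemma Gvan s X h p q : ((p < s) || (q < s))%N -> G s X h p q = 0.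
Proof.
move=> H; rewrite /G /ps_add !mulmonoE.
have -> : ((s <= p) && (s <= q))%N = false by apply/negP; lia.
have -> : ((s.+1 <= p) && (s.+1 <= q))%N = false by apply/negP; lia.
by rewrite addr0.
Qed.

Lemma Grow s X h p : G s X h p s = if (s <= p)%N then X (p - s)%N 0%N else 0.
Proof.
rewrite /G /ps_add !mulmonoE subnn leqnn andbT.
have -> : ((s.+1 <= p) && (s.+1 <= s))%N = false by apply/negP; lia.
by rewrite addr0.
Qed.

Lemma Gcol s X h q : G s X h s q = if (s <= q)%N then X 0%N (q - s)%N else 0.
Proof.
rewrite /G /ps_add !mulmonoE subnn leqnn.
have -> : ((s.+1 <= s) && (s.+1 <= q))%N = false by apply/negP; lia.
by rewrite addr0.
Qed.

Definition X1 (a b : CC) i j := ps_add (ps_scale a (mono i 0)) (ps_scale b (mono 0 j)).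

Lemma X1row a b i j m : (1 <= j)%N -> X1 a b i j m 0%N = if m == i then a else 0.
Proof.
move=> j1; rewrite /X1 /ps_add /ps_scale !monoE.
have -> : (0 == j)%N = false by apply/eqP; lia.
by rewrite andbF mulr0 addr0 andbT; case: (m == i); rewrite ?mulr1 ?mulr0.
Qed.

Lemma X1col a b i j m : (1 <= i)%N -> X1 a b i j 0%N m = if m == j then b else 0.
Proof.
move=> i1; rewrite /X1 /ps_add /ps_scale !monoE.
have -> : (0 == i)%N = false by apply/eqP; lia.
by rewrite mulr0 add0r eqxx /=; case: (m == j); rewrite ?mulr1 ?mulr0.
Qed.

Lemma shift_eq s (c : CC) r p :
  (if (s <= p)%N then (if (p - s == r)%N then c else 0) else 0) =
  (if p == (s + r)%N then c else 0).
Proof.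
case: (boolP (s <= p)%N) => sp.
  by have -> : (p - s == r)%N = (p == s + r)%N by apply/eqP/eqP; lia.
by have -> : (p == s + r)%N = false by apply/eqP; lia.
Qed.

Lemma G_row1 s a b i j h p : (1 <= j)%N ->
  G s (X1 a b i j) h p s = if p == (s + i)%N then a else 0.
Proof. by move=> j1; rewrite Grow -(shift_eq s a i p); case: ifP => // _; rewrite X1row. Qed.

Lemma G_col1 s a b i j h q : (1 <= i)%N ->
  G s (X1 a b i j) h s q = if q == (s + j)%N then b else 0.
Proof. by move=> i1; rewrite Gcol -(shift_eq s b j q); case: ifP => // _; rewrite X1col. Qed.

Lemma lev1 I s i j F : type1 I s i j -> Jk I s F ->
  exists (H : ps) (a b : CC), [/\ a != 0, b != 0,
    forall m, F (s+m)%N s = if (i <= m)%N then H (m - i)%N 0%N * a else 0 &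
    forall m, F s (s+m)%N = if (j <= m)%N then H 0%N (m - j)%N * b else 0].
Proof.
case=> i1 [j1 [a [b [h [a0 [b0 /= [_ eqp]]]]]]] JF.
case: (proj1 (eqp F) JF) => g [H [[_ [g' ->]] ->]].
exists H, a, b; split => // m; rewrite /ps_add mulmonoE.
  have -> : ((s.+1 <= s + m) && (s.+1 <= s))%N = false by apply/negP; lia.
  rewrite add0r (@rowE H (G s (X1 a b i j) h) s (s + i)%N a).
  - by rewrite leq_add2l subnDl.
  - by move=> p q qs; apply: Gvan; rewrite qs orbT.
  - by move=> p; apply: G_row1.
have -> : ((s.+1 <= s) && (s.+1 <= s + m))%N = false by apply/negP; lia.
rewrite add0r (@colE H (G s (X1 a b i j) h) s (s + j)%N b).
- by rewrite leq_add2l subnDl.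
- by move=> p q ps; apply: Gvan; rewrite ps.
- by move=> q; apply: G_col1.
Qed.

Lemma G_rowx s i h p : G s (mono i 0) h p s = if p == (s + i)%N then 1 else 0.
Proof. rewrite Grow -(shift_eq s 1 i p); case: ifP => // _; by rewrite monoE andbT. Qed.

Lemma G_colx s i h q : (1 <= i)%N -> G s (mono i 0) h s q = if q == 0%N then 0 else 0.
Proof.
move=> i1; rewrite Gcol monoE; have -> : (0 == i)%N = false by apply/eqP; lia.
by case: ifP; case: ifP.
Qed.

Lemma G_rowy s j h p : (1 <= j)%N -> G s (mono 0 j) h p s = if p == 0%N then 0 else 0.
Proof.
move=> j1; rewrite Grow monoE; have -> : (0 == j)%N = false by apply/eqP; lia.
by rewrite andbF; case: ifP; case: ifP.
Qed.

Lemma G_coly s j h q : G s (mono 0 j) h s q = if q == (s + j)%N then 1 else 0.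
Proof. rewrite Gcol -(shift_eq s 1 j q); case: ifP => // _; by rewrite monoE eqxx. Qed.

Lemma lev2 I s i j F : type2 I s i j -> Jk I s F ->
  exists H1 H2 : ps,
    (forall m, F (s+m)%N s = if (i <= m)%N then H1 (m - i)%N 0%N else 0) /\
    (forall m, F s (s+m)%N = if (j <= m)%N then H2 0%N (m - j)%N else 0).
Proof.
case=> i1 j1 [h1 [h2 /= [_ _ eqp]]] _ JF.
case: (proj1 (eqp F) JF) => g [H1 [H2 [[_ [g' ->]] ->]]].
exists H1, H2; split => m; rewrite /ps_add mulmonoE.
  have -> : ((s.+1 <= s + m) && (s.+1 <= s))%N = false by apply/negP; lia.
  rewrite add0r (@rowE H1 (G s (mono i 0) h1) s (s + i)%N 1).
  rewrite (@rowE H2 (G s (mono 0 j) h2) s 0%N 0).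
  - by rewrite leq_add2l subnDl mulr0 addr0; case: ifP; rewrite ?mulr1.
  - by move=> p q qs; apply: Gvan; rewrite qs orbT.
  - by move=> p; apply: G_rowy.
  - by move=> p q qs; apply: Gvan; rewrite qs orbT.
  - by move=> p; apply: G_rowx.
have -> : ((s.+1 <= s) && (s.+1 <= s + m))%N = false by apply/negP; lia.
rewrite add0r (@colE H1 (G s (mono i 0) h1) s 0%N 0).
rewrite (@colE H2 (G s (mono 0 j) h2) s (s + j)%N 1).
- by rewrite leq_add2l subnDl mulr0 add0r; case: ifP; rewrite ?mulr1.
- by move=> p q ps; apply: Gvan; rewrite ps.
- by move=> q; apply: G_coly.
- by move=> p q ps; apply: Gvan; rewrite ps.
- by move=> q; apply: G_colx.
Qed.

Lemma divis s F : (forall p q, ((p < s) || (q < s))%N -> F p q = 0) ->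
  exists h, F = ps_mul (mono s s) h.
Proof.
move=> H; exists (fun p q => F (p + s)%N (q + s)%N).
apply: functional_extensionality => p; apply: functional_extensionality => q.
rewrite mulmonoE; case: ifP => C.
  by rewrite !subnK //; move/andP: C => [] //.
apply: H; case/nandP: (negbT C); rewrite -!ltnNge => -> //; by rewrite orbT.
Qed.

Lemma Jk_mul I s M f : is_ideal I -> I f ->
  (forall p q, ((p < s) || (q < s))%N -> ps_mul M f p q = 0) ->
  Jk I s (ps_mul M f).
Proof. by case=> _ _ Im If V; split; [apply: Im | apply: divis]. Qed.

Lemma lev1k I k i j : is_ideal I -> type1 I k i j ->
  exists F (a b : CC), [/\ a != 0, b != 0, Jk I k.+1 F,
    forall m, F (k.+1 + m)%N k.+1 = if m == i then a else 0 &
    forall m, F k.+1 (k.+1 + m)%N = if m == j then b else 0].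
Proof.
move=> II [i1 [j1 [a [b [h [a0 [b0 /= [[IE _] _]]]]]]]].
exists (ps_mul (mono 1 1) (G k (X1 a b i j) h)), a, b; split => //.
- apply: Jk_mul => // p q pq; rewrite mulmonoE; case: ifP => // C.
  by apply: Gvan; lia.
- move=> m; rewrite mulmonoE /=.
  rewrite (_ : (k.+1 + m - 1 = k + m)%N); last by lia.
  rewrite (_ : (k.+1 - 1 = k)%N); last by lia.
  by rewrite G_row1 // eqn_add2l.
- move=> m; rewrite mulmonoE /=.
  rewrite (_ : (k.+1 + m - 1 = k + m)%N); last by lia.
  rewrite (_ : (k.+1 - 1 = k)%N); last by lia.
  by rewrite G_col1 // eqn_add2l.
Qed.

Lemma lev2k I k i j : is_ideal I -> type2 I k i j ->
  exists F1 F2, [/\ Jk I k.+1 F1, Jk I k.+1 F2,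
    forall m, F1 (k.+1 + m)%N k.+1 = if m.+1 == i then 1 else 0 &
    forall m, F2 k.+1 (k.+1 + m)%N = if m.+1 == j then 1 else 0].
Proof.
move=> II [i1 j1 [h1 [h2 /= [[IE1 _] [IE2 _] _]]] _].
exists (ps_mul (mono 0 1) (G k (mono i 0) h1)), (ps_mul (mono 1 0) (G k (mono 0 j) h2)).
split.
- apply: Jk_mul => // p q pq; rewrite mulmonoE; case: ifP => // C.
  rewrite subn0; case: (ltngtP p k) => pk.
  + by apply: Gvan; rewrite pk.
  + by apply: Gvan; apply/orP; right; lia.
  + rewrite pk; case: (boolP (q - 1 < k)%N) => qk.
      by apply: Gvan; rewrite qk orbT.
    by rewrite G_colx //; case: ifP.
- apply: Jk_mul => // p q pq; rewrite mulmonoE; case: ifP => // C.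
  rewrite subn0; case: (ltngtP q k) => qk.
  + by apply: Gvan; rewrite qk orbT.
  + by apply: Gvan; apply/orP; left; lia.
  + rewrite qk; case: (boolP (p - 1 < k)%N) => pk.
      by apply: Gvan; rewrite pk.
    by rewrite G_rowy //; case: ifP.
- move=> m; rewrite mulmonoE /= subn0.
  rewrite (_ : (k.+1 - 1 = k)%N); last by lia.
  rewrite G_rowx.
  have -> : (k.+1 + m == k + i)%N = (m.+1 == i) by apply/eqP/eqP; lia.
  by [].
- move=> m; rewrite mulmonoE /= subn0.
  rewrite (_ : (k.+1 - 1 = k)%N); last by lia.
  rewrite G_coly.
  have -> : (k.+1 + m == k + j)%N = (m.+1 == j) by apply/eqP/eqP; lia.
  by [].
Qed.

Lemma cmp1 (a a' : CC) (H : nat -> CC) i i' : a != 0 -> a' != 0 ->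
  (forall m, (if m == i then a else 0) = if (i' <= m)%N then H (m - i')%N * a' else 0) ->
  [/\ (i' <= i)%N, (H 0%N != 0 -> i' = i) & (H 0%N == 0 -> (i' < i)%N)].
Proof.
move=> a0 a'0 E.
have le : (i' <= i)%N.
  case: (leqP i' i) => // lt; move: (E i); rewrite eqxx leqNgt lt /= => E0.
  by move: a0; rewrite E0 eqxx.
split => // H0.
  move: (E i'); rewrite leqnn subnn.
  have [->//|ne] := eqVneq i' i.
  move=> E0; have : H 0%N * a' != 0 by rewrite mulf_neq0.
  by rewrite -E0 eqxx.
rewrite ltn_neqAle le andbT; apply/eqP => Ei.
move: (E i); rewrite eqxx -Ei leqnn subnn (eqP H0) mul0r => E0.
by move: a0; rewrite E0 eqxx.
Qed.

Lemma cmp2 (a : CC) (H : nat -> CC) i i' : a != 0 ->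
  (forall m, (if m == i then a else 0) = if (i' <= m)%N then H (m - i')%N else 0) ->
  (i' <= i)%N.
Proof.
move=> a0 E.
case: (leqP i' i) => // lt; move: (E i); rewrite eqxx leqNgt lt /= => E0.
by move: a0; rewrite E0 eqxx.
Qed.

Lemma cmp3 (H : nat -> CC) i i' : (1 <= i)%N ->
  (forall m, (if m.+1 == i then 1 else 0) = if (i' <= m)%N then H (m - i')%N else 0) ->
  (i' < i)%N.
Proof.
move=> i1 E.
case: (leqP i i') => // le; move: (E i.-1).
rewrite prednK // eqxx leqNgt (_ : (i.-1 < i')%N = true) /=; last by lia.
move=> E0; have : (1 : CC) != 0 by rewrite oner_eq0.
by rewrite E0 eqxx.
Qed.

Close Scope ring_scope.

Theorem mainTheorem8 (u v n : nat) (I : psset) (k ik jk ik1 jk1 : nat) :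
  (0 < u)%N -> (u <= v)%N -> in_Hilb n u v I -> (k + 2 <= v)%N ->
  [/\ (type1 I k ik jk -> type1 I k.+1 ik1 jk1 ->
         (ik = ik1 /\ jk = jk1) \/ (ik1 < ik /\ jk1 < jk))%N,
      (type2 I k ik jk -> type2 I k.+1 ik1 jk1 -> ik1 < ik /\ jk1 < jk)%N,
      (type1 I k ik jk -> type2 I k.+1 ik1 jk1 -> ik1 <= ik /\ jk1 <= jk)%N &
      (type2 I k ik jk -> type1 I k.+1 ik1 jk1 -> ik1 < ik /\ jk1 < jk)%N].
Proof.
move=> _ _ [II _ _ _] _; split.
- move=> T T'.
  have [F [a [b [a0 b0 JF Fr Fc]]]] := lev1k II T.
  have [H [a' [b' [a0' b0' Hr Hc]]]] := lev1 T' JF.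
  have [lei ei lti] := @cmp1 a a' (fun n => H n 0%N) ik ik1 a0 a0'
     (fun m => etrans (esym (Fr m)) (Hr m)).
  have [lej ej ltj] := @cmp1 b b' (fun n => H 0%N n) jk jk1 b0 b0'
     (fun m => etrans (esym (Fc m)) (Hc m)).
  case: (boolP (H 0%N 0%N == 0%R)) => H0.
    by right; split; [apply: lti | apply: ltj].
  by left; split; [rewrite ei | rewrite ej].
- move=> T T'.
  have [i1 j1 _ _] := T.
  have [F1 [F2 [JF1 JF2 Fr Fc]]] := lev2k II T.
  have [H1 [_ [Hr _]]] := lev2 T' JF1.
  have [_ [H2 [_ Hc]]] := lev2 T' JF2.
  split.
    exact: (@cmp3 (fun n => H1 n 0%N) ik ik1 i1 (fun m => etrans (esym (Fr m)) (Hr m))).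
  exact: (@cmp3 (fun n => H2 0%N n) jk jk1 j1 (fun m => etrans (esym (Fc m)) (Hc m))).
- move=> T T'.
  have [F [a [b [a0 b0 JF Fr Fc]]]] := lev1k II T.
  have [H1 [H2 [Hr Hc]]] := lev2 T' JF.
  split.
    exact: (@cmp2 a (fun n => H1 n 0%N) ik ik1 a0 (fun m => etrans (esym (Fr m)) (Hr m))).
  exact: (@cmp2 b (fun n => H2 0%N n) jk jk1 b0 (fun m => etrans (esym (Fc m)) (Hc m))).
- move=> T T'.
  have [i1 j1 _ _] := T.
  have [F1 [F2 [JF1 JF2 Fr Fc]]] := lev2k II T.
  have [H [a' [b' [_ _ Hr _]]]] := lev1 T' JF1.
  have [H' [a'' [b'' [_ _ _ Hc]]]] := lev1 T' JF2.
  split.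
    exact: (@cmp3 (fun n => (H n 0%N * a')%R) ik ik1 i1 (fun m => etrans (esym (Fr m)) (Hr m))).
  exact: (@cmp3 (fun n => (H' 0%N n * b'')%R) jk jk1 j1 (fun m => etrans (esym (Fc m)) (Hc m))).
Qed.
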